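(* Let $X$ be a real-valued random variable and let $f,g:\mathbb{R}\to\mathbb{R}^+$ be bounded increasing functions. Then $$\operatorname{Cov}[f(X)g(X),\,g(X)]\;\geq\;\mathbb{E}[f(X)]\,\operatorname{Var}[g(X)].$$ *)

(* Defs.v *)
From HB Require Import structures.
From mathcomp Require Import all_boot all_order all_algebra.
From mathcomp Require Import all_classical all_reals all_analysis.

(* Main.v *)
Require Import Defs.
From HB Require Import structures.
From mathcomp Require Import all_boot all_order all_algebra.
From mathcomp Require Import all_classical all_reals all_analysis.
From mathcomp Require Import measurable_realfun ring lra.
Import Order.TTheory GRing.Theory Num.Theory.
Local Open Scope ring_scope.
Local Open Scope classical_set_scope.
Lemma sign_split (R : realType) (a b : R -> R) (M : R) :
  (forall x, 0 <= a x) -> (forall x, a x <= M) ->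
  {homo a : x y / x <= y} ->
  (forall x y, x <= y -> 0 < b x -> 0 < b y) ->
  exists al : R, forall x, 0 <= (a x - al) * b x.
Proof.
move=> a0 aM ai bup.
have [[y0 Hy0]|none] := pselect (exists y, 0 < b y); last first.
  exists M => x; rewrite mulr_le0 // ?subr_le0 //.
  by rewrite leNgt; apply/negP => bx; apply: none; exists x.
set S := [set a y | y in [set y | 0 < b y]].
have hlb : has_lbound S by exists 0 => _ [y _ <-].
have ne : nonempty S by exists (a y0), y0.
exists (inf S) => x.
have [bx|bx] := ltP 0 (b x).
  apply: mulr_ge0 (ltW bx); rewrite subr_ge0.
  by apply: ge_inf => //; exists x.
apply: mulr_le0 => //; rewrite subr_le0.
apply: lb_le_inf => // _ [y /= hy <-]; apply: ai.
rewrite leNgt; apply/negP => yx.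
by move: bx; rewrite leNgt (bup y x (ltW yx) hy).
Qed.
Section bm.
Context {d} {T : measurableType d} {R : realType} (P : probability T R).

Definition bm (h : T -> R) := measurable_fun setT h /\ exists M, forall x, `|h x| <= M.

Lemma bm_Lfun {h} : bm h -> h \in Lfun P 1.
Proof.
move=> [mh [M hM]]; apply/Lfun1_integrable.
apply: measurable_bounded_integrable => //.
  by rewrite ltey_eq fin_num_measure.
exists M; split; first by rewrite num_real.
by move=> y My x _ /=; apply: le_trans (hM x) (ltW My).
Qed.

Lemma bmD {h1 h2} : bm h1 -> bm h2 -> bm (fun w => h1 w + h2 w).
Proof.
move=> [m1 [M1 H1]] [m2 [M2 H2]]; split; first exact: measurable_funD.
exists (M1 + M2) => x; apply: le_trans (ler_normD _ _) _; exact: lerD.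
Qed.

Lemma bmM {h1 h2} : bm h1 -> bm h2 -> bm (fun w => h1 w * h2 w).
Proof.
move=> [m1 [M1 H1]] [m2 [M2 H2]]; split; first exact: measurable_funM.
exists (M1 * M2) => x; rewrite normrM; apply: ler_pM => //.
Qed.

Lemma bmcst c : bm (fun _ => c).
Proof. by split; [exact: measurable_cst | exists `|c|]. Qed.

Definition Ex h := fine 'E_P[h]%E.

Lemma ExE {h} : bm h -> 'E_P[h]%E = (Ex h)%:E.
Proof. by move=> /bm_Lfun hl; rewrite /Ex fineK // expectation_fin_num. Qed.

Lemma ExD {h1 h2} : bm h1 -> bm h2 -> Ex (fun w => h1 w + h2 w) = Ex h1 + Ex h2.
Proof.
move=> b1 b2; rewrite /Ex expectationD ?bm_Lfun //.
by rewrite (ExE b1) (ExE b2).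
Qed.

Lemma ExZ k {h} : bm h -> Ex (k \o* h) = k * Ex h.
Proof.
move=> b; rewrite /Ex expectationZl ?bm_Lfun // (ExE b) //.
Qed.

Lemma Excst c : Ex (fun _ => c) = c.
Proof. by rewrite /Ex expectation_cst. Qed.

Lemma Ex_ge0 h : (forall w, 0 <= h w) -> 0 <= Ex h.
Proof. by move=> h0; rewrite /Ex fine_ge0 // expectation_ge0. Qed.

Lemma bmZ k {h} : bm h -> bm (k \o* h).
Proof. by move=> b; exact (bmM b (bmcst k)). Qed.

End bm.


Theorem lemma4p14 (d : measure_display) (T : measurableType d) (R : realType)
  (P : probability T R) (X : {RV P >-> R}) (f g : R -> R)
  (f_ge0 : forall x, 0 <= f x) (g_ge0 : forall x, 0 <= g x)
  (f_incr : {homo f : x y / x <= y}) (g_incr : {homo g : x y / x <= y})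
  (f_bdd : exists M : R, forall x, `|f x| <= M)
  (g_bdd : exists M : R, forall x, `|g x| <= M) :
  ('E_P[f \o X] * 'V_P[g \o X] <=
     covariance P ((f \o X) * (g \o X)) (g \o X))%E.
Proof.
have [Mf hMf] := f_bdd; have [Mg hMg] := g_bdd.
have mX : measurable_fun setT X := measurable_funPT X.
have bF : bm (f \o X).
  split; last by exists Mf => w; exact: hMf.
  exact: measurableT_comp (nondecreasing_measurable measurableT f_incr) mX.
have bG : bm (g \o X).
  split; last by exists Mg => w; exact: hMg.
  exact: measurableT_comp (nondecreasing_measurable measurableT g_incr) mX.
set F := f \o X in bF *; set G := g \o X in bG *.
have bFG : bm (fun w => F w * G w) := bmM bF bG.
have bGG : bm (fun w => G w * G w) := bmM bG bG.
have bFGG : bm (fun w => F w * G w * G w) := bmM bFG bG.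
have eV : 'V_P[G]%E = (Ex P (fun w => G w * G w) - Ex P G * Ex P G)%:E.
  rewrite /variance covarianceE ?bm_Lfun //.
  by rewrite (ExE P bGG) (ExE P bG).
have eC : covariance P (F * G) G =
    (Ex P (fun w => F w * G w * G w) - Ex P (fun w => F w * G w) * Ex P G)%:E.
  rewrite covarianceE ?bm_Lfun //.
  by rewrite (ExE P bFGG) (ExE P bFG) (ExE P bG).
rewrite eV eC (ExE P bF) -EFinM lee_fin.
set eG := Ex P G; set m := Ex P (fun w => G w * G w) - eG * eG.
have m0 : 0 <= m by rewrite -lee_fin -eV variance_ge0.
have bup : forall x y, x <= y -> 0 < g x * (g x - eG) - m ->
    0 < g y * (g y - eG) - m.
  move=> x y xy hx.
  have gxy := g_incr _ _ xy; have gx0 := g_ge0 x.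
  have h1 : 0 < g x - eG.
    rewrite ltNge; apply/negP => h; move: hx; rewrite ltNge; apply/negP/negPn.
    by rewrite subr_le0; apply: le_trans m0; rewrite mulr_ge0_le0.
  have h2 : g x * (g x - eG) <= g y * (g y - eG).
    by apply: ler_pM => //; [exact: ltW | apply: lerB].
  by apply: lt_le_trans hx _; apply: lerB.
have [al Hal] := sign_split R f (fun x => g x * (g x - eG) - m) Mf f_ge0
   (fun x => le_trans (ler_norm _) (hMf x)) f_incr bup.
set Z := fun w => (F w - al) * (G w * (G w - eG) - m).
have Z0 : 0 <= Ex P Z by apply: Ex_ge0 => w; exact: Hal.
have eZ : Z = fun w => ((((((fun w => F w * G w * G w) w
   + ((- eG) \o* (fun w => F w * G w)) w)
   + ((- m) \o* F) w) + ((- al) \o* (fun w => G w * G w)) w)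
   + ((al * eG) \o* G) w) + (fun _ => al * m) w).
  by apply/funext => w; rewrite /Z /=; ring.
rewrite eZ in Z0.
rewrite !ExD in Z0; try by repeat (apply: bmD || apply: bmZ || apply: bmcst || assumption).
rewrite !ExZ ?Excst // ?bmcst // in Z0.
rewrite -/eG in Z0.
rewrite (_ : Ex P (fun w => G w * G w) = m + eG * eG) in Z0; last by rewrite /m; ring.
  lra.
exact: bmcst.
Qed.
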